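(* Let $m\ge 2$ and $1\le\ell<m$, and let $0<\varepsilon<m-\ell$. There is no rule $\mathcal{F}$ that takes an $\ell$-truncated election and returns a single candidate such that, for every election $E$, $\mathrm{sc}_{\mathrm{MM}}(\mathcal{F}(\mathrm{trunc}(E,\ell)))\ge\frac{1}{m-\ell-\varepsilon}\max_{c\in C}\mathrm{sc}_{\mathrm{MM}}(c)$. In other words, no algorithm working on $\ell$-truncated ballots is a $\frac{1}{m-\ell-\varepsilon}$-approximation of the Minimax rule.
   Context: An election consists of a set $V$ of $n$ voters and a set $C$ of $m$ candidates; each voter $v$ has a strict linear order $\succ_v$ over $C$. For $c,c'\in C$, $\mathrm{sc}_{\mathrm{MM}}(c,c')=|\{v: c\succ_v c'\}|$ and $\mathrm{sc}_{\mathrm{MM}}(c)=\min_{c'\neq c}\mathrm{sc}_{\mathrm{MM}}(c,c')$; the Minimax rule selects candidates maximizing $\mathrm{sc}_{\mathrm{MM}}$. $\mathrm{trunc}(E,\ell)$ is the partial election in which each voter reveals only the ordered list of her top $\ell$ candidates. *)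

(* Defs.v *)
From HB Require Import structures.
From mathcomp Require Import all_boot all_order all_algebra all_fingroup.
Open Scope nat_scope.
Set Implicit Arguments. Unset Strict Implicit. Unset Printing Implicit Defensive.

(* A vote (strict linear order over the candidates 'I_m) is a permutation
   s : {perm 'I_m}: s i is the candidate ranked at position i (0 = top). *)
Definition vote (m : nat) := {perm 'I_m}.
Definition election (m : nat) := seq (vote m).

Definition prefers m (s : vote m) (c c' : 'I_m) : bool :=
  (s^-1)%g c < (s^-1)%g c'.

Definition scMM2 m (E : election m) (c c' : 'I_m) : nat :=
  count (fun s => prefers s c c') E.

(* sc_MM(c) = min_{c' <> c} sc_MM(c, c')  (the neutral element size E is an
   upper bound of every pairwise score, and the range is nonempty for m >= 2) *)
Definition scMM m (E : election m) (c : 'I_m) : nat :=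
  \big[minn/size E]_(c' | c' != c) scMM2 E c c'.

Definition trunc_vote m (s : vote m) (l : nat) : seq 'I_m :=
  [seq s i | i : 'I_m <- enum 'I_m & (nat_of_ord i < l)%N].
Definition trunc m (E : election m) (l : nat) : seq (seq 'I_m) :=
  [seq trunc_vote s l | s <- E].

(* Main.v *)
Require Import Defs.
From HB Require Import structures.
From mathcomp Require Import all_boot all_order all_algebra all_fingroup.
From mathcomp Require Import zify ring lra.
Import Order.TTheory GRing.Theory Num.Theory.
Set Implicit Arguments. Unset Strict Implicit. Unset Printing Implicit Defensive.
Local Open Scope ring_scope.

Lemma val_add1 n (y : 'I_n.+2) : y + 1 != 0 -> nat_of_ord (y + 1) = (y + 1)%N.
Proof.
case: y => y hy; rewrite -val_eqE /= (modn_small (isT : (1 < n.+2)%N)) addn1.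
have [->|hlt] := eqVneq y.+1 n.+2; first by rewrite modnn.
rewrite modn_small //; lia.
Qed.

Definition rk n (j : 'I_n.+2) : {perm 'I_n.+2} := perm (@addIr _ (- j)).

Lemma rkE n (j x : 'I_n.+2) : rk j x = x - j.
Proof. by rewrite permE. Qed.

Definition tw n (L w j : 'I_n.+2) : {perm 'I_n.+2} :=
  if (L <= rk j w)%N then (rk j * tperm (rk j w) L)%g else rk j.

Lemma prefE m (r : {perm 'I_m}) x y : prefers (r^-1)%g x y = (r x < r y)%N.
Proof. by rewrite /prefers invgK. Qed.

Lemma truncE n (L w j : 'I_n.+2) :
  trunc_vote (tw L w j)^-1%g L = trunc_vote (rk j)^-1%g L.
Proof.
rewrite /trunc_vote /tw; case: ifP => // H.
apply/eq_in_map => i; rewrite mem_filter => /andP[hi _].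
rewrite invMg permM tpermV tpermD //.
- by apply/eqP => E; move: hi H; rewrite -E; lia.
- by apply/eqP => E; move: hi; rewrite -E ltnn.
Qed.

Lemma prefA n (L w j c : 'I_n.+2) : c != w -> (L <= rk j c)%N ->
  prefers (tw L w j)^-1%g w c.
Proof.
move=> hcw hc; rewrite prefE /tw.
case: ifP => H; last by move/negbT: H; rewrite -ltnNge => H; apply: leq_trans hc.
rewrite !permM tpermL.
have hne : rk j c != rk j w by rewrite (inj_eq perm_inj).
case: tpermP => [E|E|/eqP h1 /eqP h2].
- by rewrite E eqxx in hne.
- have : nat_of_ord (rk j w) != L by rewrite -E (inj_eq val_inj) eq_sym.
  move: H; lia.
- have : nat_of_ord (rk j c) != L by rewrite (inj_eq val_inj).
  move: hc; lia.
Qed.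

Lemma prefB n (L w j : 'I_n.+2) : prefers (tw L w j)^-1%g (w + 1) w -> j = w + 1.
Proof.
rewrite prefE /tw => H; apply/eqP; apply: contraLR H => hj.
have e : rk j (w + 1) = rk j w + 1 by rewrite !rkE addrAC.
have hnz : rk j w + 1 != 0.
  by rewrite -e rkE subr_eq0 eq_sym.
have hv := val_add1 hnz; rewrite -e in hv.
case: ifP => H; last by rewrite -leqNgt hv; lia.
rewrite !permM tpermL tpermD.
- move: hv H; lia.
- rewrite -(inj_eq val_inj) /=; move: hv; lia.
- rewrite -(inj_eq val_inj) /=; move: hv H; lia.
Qed.
Lemma count_iota_geq a k : count (fun i => a <= i)%N (iota 0 k) = (k - a)%N.
Proof.
elim: k => [|k IH] //; rewrite -addn1 iotaD count_cat IH /= add0n addn0.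
case: (leqP a k) => h; rewrite ?h; lia.
Qed.

Lemma count_hidden n (L c : 'I_n.+2) :
  count (fun j : 'I_n.+2 => L <= rk j c)%N (enum 'I_n.+2) = (n.+2 - L)%N.
Proof.
rewrite -sum1_count big_enum_cond /=.
rewrite (reindex_inj (h := fun i => c - i)); last first.
  by move=> x y /= /addrI /oppr_inj.
under eq_bigl => i do rewrite rkE opprB addrC subrK.
rewrite -(big_mkord (fun i => L <= i)%N (fun _ => 1%N)) sum1_count.
by rewrite count_iota_geq.
Qed.

Theorem theorem7 (R : realFieldType) (m l : nat) (eps : R)
  (hm : (2 <= m)%N) (hl1 : (1 <= l)%N) (hlm : (l < m)%N)
  (heps0 : 0 < eps) (heps1 : eps < m%:R - l%:R) :
  ~ exists F : seq (seq 'I_m) -> 'I_m,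
      forall E : election m,
        (\max_(c : 'I_m) scMM E c)%:R / (m%:R - l%:R - eps)
          <= (scMM E (F (trunc E l)))%:R.
Proof.
case: m hm hlm heps1 => [|[|n]] // _ hlm heps1 [F HF].
pose L : 'I_n.+2 := Ordinal hlm.
pose T := trunc [seq (rk j)^-1%g | j <- enum 'I_n.+2] l.
pose c := F T.
pose w := c - 1.
pose E : election n.+2 := [seq (tw L w j)^-1%g | j <- enum 'I_n.+2].
have hT : trunc E l = T.
  rewrite /T /E /trunc -!map_comp; apply/eq_in_map => j _ /=.
  exact: (truncE L w j).
have := HF E; rewrite hT -/c.
have hc : c = w + 1 by rewrite /w subrK.
have hwc : w != c.
  rewrite hc -subr_eq0 opprD addrA subrr sub0r oppr_eq0.
  by rewrite -(inj_eq val_inj).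
have hs : (scMM E c <= 1)%N.
  apply: (@leq_trans (scMM2 E c w)).
    rewrite /scMM -minEnat; have hcw : w != c by []. exact: (@bigmin_le_cond _ _ _ (size E) w (fun c0 => c0 != c) (scMM2 E c) hcw).
  rewrite /scMM2 /E count_map.
  apply: (@leq_trans (count (pred1 c) (enum 'I_n.+2))).
    apply: sub_count => j /=; rewrite hc => /prefB ->; exact: eqxx.
  by rewrite count_uniq_mem ?enum_uniq // mem_enum.
have hM : (n.+2 - l <= \max_(c0 : 'I_n.+2) scMM E c0)%N.
  apply: (@leq_trans (scMM E w)); last exact: leq_bigmax.
  rewrite /scMM -minEnat; apply: (@le_bigmin _ _ _ _ (scMM2 E w) (size E) (n.+2 - l)%N (fun c0 => c0 != w)).
    by rewrite /E size_map size_enum_ord leEnat leq_subr.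
  move=> c' hc'.
  rewrite /scMM2 /E count_map -(count_hidden L c').
  apply: sub_count => j /= hj; exact: prefA.
set M := \max_(c0 < n.+2) scMM E c0.
set s := scMM E c.
have hd : 0 < n.+2%:R - l%:R - eps :> R by rewrite subr_gt0.
rewrite ler_pdivrMr // => H.
have hM' : (n.+2 - l)%N%:R <= M%:R :> R by rewrite ler_nat.
rewrite natrB ?(ltnW hlm) // in hM'.
have hs' : s%:R <= 1%:R :> R by rewrite ler_nat.
have hs0 : 0 <= s%:R :> R by [].
nra.
Qed.
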